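(* Let $s\ge 2$ and let $a,b\ge 1$ be integers with $a+b\le s$. Let $C$ be a set with $|C|\ge s+1$ and let $z_1,z_2$ be two distinct elements not in $C$. Let \[ \mathcal{C}=\{\{z_1\}\cup D: D\subseteq C,\ |D|=a\}\cup\{\{z_2\}\cup E: E\subseteq C,\ |E|=b\}. \] Then $\mathcal{C}$ is non-separable.
   Context: Two families $\mathcal{A}_1,\mathcal{A}_2$ are cross-intersecting if $A_1\cap A_2\neq\emptyset$ for all $A_1\in\mathcal{A}_1$, $A_2\in\mathcal{A}_2$. A family $\mathcal{A}$ is non-separable if for every partition $\mathcal{A}=\mathcal{A}_1\cup\mathcal{A}_2$ (disjoint union) with $(\mathcal{A}_1,\mathcal{A}_2)$ cross-intersecting, we have $\mathcal{A}_1=\emptyset$ or $\mathcal{A}_2=\emptyset$. *)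

(* Defs.v *)
From mathcomp Require Import all_boot.
Set Implicit Arguments. Unset Strict Implicit. Unset Printing Implicit Defensive.

Definition cross_intersecting (T : finType) (A1 A2 : {set {set T}}) : Prop :=
  forall X Y, X \in A1 -> Y \in A2 -> X :&: Y != set0.

Definition non_separable (T : finType) (A : {set {set T}}) : Prop :=
  forall A1 A2 : {set {set T}},
    A1 :&: A2 = set0 -> A1 :|: A2 = A -> cross_intersecting A1 A2 ->
    A1 = set0 \/ A2 = set0.

Definition fam_C (T : finType) (C : {set T}) (z1 z2 : T) (a b : nat)
  : {set {set T}} :=
  [set z1 |: D | D in powerset C & #|D| == a] :|:
  [set z2 |: E | E in powerset C & #|E| == b].

(* Main.v *)
Require Import Defs.
From mathcomp Require Import all_boot.
From mathcomp Require Import zify.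

Set Implicit Arguments. Unset Strict Implicit. Unset Printing Implicit Defensive.

Lemma sub_card_ex (T : finType) (S : {set T}) n :
  n <= #|S| -> exists D : {set T}, D \subset S /\ #|D| = n.
Proof.
elim: n => [|n IH] H.
  by exists set0; rewrite sub0set cards0.
have [D [DS cD]] := IH (ltnW H).
have : 0 < #|S :\: D| by rewrite cardsD (setIidPr DS) cD; lia.
case/card_gt0P => x; rewrite inE => /andP [xD xS].
exists (x |: D); split; first by rewrite subUset sub1set xS DS.
by rewrite cardsU1 xD cD.
Qed.

Lemma avoid_ex (T : finType) (C S : {set T}) n :
  n + #|S| <= #|C| -> exists D : {set T}, D \subset C /\ [disjoint D & S] /\ #|D| = n.
Proof.
move=> H.
have : n <= #|C :\: S|.
  rewrite cardsD; have := subset_leq_card (subsetIr C S); lia.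
case/sub_card_ex => D [DS cD]; exists D; split; last split => //.
  by apply: subset_trans DS (subsetDl _ _).
rewrite disjoint_subset; apply: subset_trans DS _.
by apply/subsetP => x; rewrite !inE => /andP [].
Qed.

Theorem proposition3p2 (T : finType) (s a b : nat) (C : {set T}) (z1 z2 : T) :
  2 <= s -> 1 <= a -> 1 <= b -> a + b <= s ->
  s.+1 <= #|C| ->
  z1 != z2 -> z1 \notin C -> z2 \notin C ->
  non_separable (fam_C C z1 z2 a b).
Proof.
move=> hs ha hb hab hC z12 z1C z2C A1 A2 hI hU hX.
pose f X := X \in A1.
have inF : forall X, X \in fam_C C z1 z2 a b -> X \in A1 \/ X \in A2.
  by move=> X; rewrite -hU inE => /orP.
have notboth : forall X, X \in A1 -> X \in A2 -> False.
  move=> X h1 h2; have : X \in A1 :&: A2 by rewrite inE h1 h2.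
  by rewrite hI inE.
have same : forall X Y, X \in fam_C C z1 z2 a b -> Y \in fam_C C z1 z2 a b ->
    X :&: Y = set0 -> f X = f Y.
  move=> X Y hx hy e; rewrite /f.
  case: (inF X hx) => h1; case: (inF Y hy) => h2.
  - by rewrite h1 h2.
  - by have := hX X Y h1 h2; rewrite e eqxx.
  - by have := hX Y X h2 h1; rewrite setIC e eqxx.
  - case: (boolP (X \in A1)) => [h|_]; first by case: (notboth X h h1).
    case: (boolP (Y \in A1)) => [h|_] //; by case: (notboth Y h h2).
have mem1 : forall D : {set T}, D \subset C -> #|D| = a -> z1 |: D \in fam_C C z1 z2 a b.
  move=> D DC cD; rewrite /fam_C inE; apply/orP; left; apply/imsetP; exists D => //.
  by rewrite inE powersetE DC cD eqxx.
have mem2 : forall D : {set T}, D \subset C -> #|D| = b -> z2 |: D \in fam_C C z1 z2 a b.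
  move=> D DC cD; rewrite /fam_C inE; apply/orP; right; apply/imsetP; exists D => //.
  by rewrite inE powersetE DC cD eqxx.
have dis : forall D E : {set T}, D \subset C -> E \subset C -> [disjoint D & E] ->
    (z1 |: D) :&: (z2 |: E) = set0.
  move=> D E DC EC dDE; apply/setP => w; rewrite !inE.
  apply/negP => /andP [/orP [/eqP e1|wD] /orP [/eqP e2|wE]].
  - by move: z12; rewrite -e1 -e2 eqxx.
  - by move: z1C; rewrite -e1 (subsetP EC w wE).
  - by move: z2C; rewrite -e2 (subsetP DC w wD).
  - by rewrite (disjointFr dDE wD) in wE.
have const1 : forall k (D D' : {set T}), #|D :\: D'| = k -> D \subset C ->
    D' \subset C -> #|D| = a -> #|D'| = a -> f (z1 |: D) = f (z1 |: D').
  elim=> [|k IH] D D' hk DC D'C cD cD'.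
    have sub : D \subset D' by rewrite -setD_eq0 -cards_eq0 hk.
    have -> : D = D' by apply/eqP; rewrite eqEcard sub cD cD' leqnn.
    by [].
  have : 0 < #|D :\: D'| by rewrite hk.
  case/card_gt0P => x; rewrite inE => /andP [xD' xD].
  have : 0 < #|D' :\: D|.
    rewrite cardsD setIC; move: hk; rewrite cardsD; lia.
  case/card_gt0P => y; rewrite inE => /andP [yD yD'].
  pose D'' := y |: (D :\ x).
  have D''C : D'' \subset C.
    rewrite subUset sub1set (subsetP D'C y yD') /=.
    exact: subset_trans (subsetDl _ _) DC.
  have cD'' : #|D''| = a.
    rewrite cardsU1 !inE negb_and (negPf yD) orbT /=.
    move: cD; rewrite (cardsD1 x D) xD; lia.
  have hk'' : #|D'' :\: D'| = k.
    have -> : D'' :\: D' = (D :\: D') :\ x.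
      apply/setP => w; rewrite !inE.
      case: (eqVneq w y) => [->|nwy]; first by rewrite yD' /= andbF.
      by case: (w \in D'); case: (w == x); case: (w \in D).
    move: hk; rewrite (cardsD1 x (D :\: D')) !inE xD xD' /=; lia.
  rewrite -(IH D'' D' hk'' D''C D'C cD'' cD').
  have hU' : b + #|D :|: D''| <= #|C|.
    have : D :|: D'' \subset y |: D.
      apply/subsetP => w; rewrite !inE => /orP [->|/orP [->|/andP [_ ->]]];
        by rewrite ?orbT.
    move/subset_leq_card; rewrite cardsU1 yD cD; lia.
  have [E [EC [dE cE]]] := avoid_ex hU'.
  have dE1 : [disjoint D & E].
    by rewrite disjoint_sym in dE; exact: disjointWl (subsetUl _ _) dE.
  have dE2 : [disjoint D'' & E].
    by rewrite disjoint_sym in dE; exact: disjointWl (subsetUr _ _) dE.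
  rewrite (same _ _ (mem1 D DC cD) (mem2 E EC cE) (dis D E DC EC dE1)).
  by rewrite (same _ _ (mem1 D'' D''C cD'') (mem2 E EC cE) (dis D'' E D''C EC dE2)).
have h0 : a + #|@set0 T| <= #|C| by rewrite cards0; lia.
have [D0 [D0C [_ cD0]]] := avoid_ex h0.
have allc : forall X, X \in fam_C C z1 z2 a b -> f X = f (z1 |: D0).
  move=> X; rewrite /fam_C inE => /orP [] /imsetP [D]; rewrite inE powersetE => /andP [DC /eqP cD] ->.
    exact: (const1 _ D D0 erefl DC D0C cD cD0).
  have hab' : a + #|D| <= #|C| by rewrite cD; lia.
  have [E [EC [dE cE]]] := avoid_ex hab'.
  rewrite -(same _ _ (mem1 E EC cE) (mem2 D DC cD) (dis E D EC DC dE)).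
  exact: (const1 _ E D0 erefl EC D0C cE cD0).
case: (boolP (f (z1 |: D0))) => hc; [right|left]; apply/setP => X; rewrite inE;
  apply/negP => hX'.
- have hF : X \in fam_C C z1 z2 a b by rewrite -hU inE hX' orbT.
  have := allc X hF; rewrite hc => h1; exact: (notboth X h1 hX').
- have hF : X \in fam_C C z1 z2 a b by rewrite -hU inE hX'.
  have := allc X hF; rewrite (negPf hc). move=> h; move: hX'; change (X \in A1) with (f X); by rewrite h.
Qed.
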